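(* Let $G$ be a finite simple graph and $e$ a pair of distinct vertices of $G$. For each $i\ge0$, $$a_i(G+e)=a_i(G)+\sum_{J\in\mathcal{E}\mathcal{C}(G+e)\setminus\mathcal{E}\mathcal{C}(G)}|b(G|_J)|\cdot a_{i-\frac{|J|}{2}}\big((G+e)^\ast_J\big).$$
   Context: All graphs are finite simple graphs; $G|_I$ is the induced subgraph on $I\subseteq V(G)$. The signed $a$-number: $sa(\emptyset)=1$ for the null graph; if $G$ has connected components $G_1,\dots,G_\ell$, $sa(G)=\prod_k sa(G_k)$; if $G$ is connected and nonempty, $sa(G)=-\sum_{I\subsetneq V(G)}sa(G|_I)$ when $|V(G)|$ is even and $sa(G)=0$ when $|V(G)|$ is odd. The $a$-number is $a(G)=|sa(G)|$; for an integer $i$, $a_i(G)=\sum_{I\subseteq V(G),\,|I|=2i}a(G|_I)$ (so $a_i(G)=0$ if $i<0$ or $2i>|V(G)|$). The $b$-number is $b(G)=\sum_{I\subseteq V(G)}sa(G|_I)$. $\mathcal{E}\mathcal{C}(G)=\{I\subseteq V(G): G|_I\text{ has no connected component of odd order}\}$. $G+e$ is $G$ with $e$ added as an edge ($G+e=G$ if $e\in E(G)$). The reconnected complement $H^\ast_J$ of $J\subseteq V(H)$ is the graph on $V(H)\setminus J$ in which $\{a,b\}$ is an edge iff there is a path from $a$ to $b$ in $H|_{J\cup\{a,b\}}$. *)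

(* Defs.v *)
From mathcomp Require Import all_boot all_order all_algebra.
Set Implicit Arguments. Unset Strict Implicit. Unset Printing Implicit Defensive.
Import GRing.Theory Num.Theory.
Local Open Scope ring_scope.

(* A finite simple graph is a symmetric irreflexive relation g on a finType T;
   its vertex set is [set: T]. Induced subgraphs are given by vertex sets I. *)
Section Graphs.
Variable T : finType.

Definition rel_on (g : rel T) (I : {set T}) : rel T :=
  [rel x y | [&& x \in I, y \in I & g x y]].

Definition comps (g : rel T) (I : {set T}) : {set {set T}} :=
  [set [set y in I | connect (rel_on g I) x y] | x in I].

Fixpoint sa_fuel (n : nat) (g : rel T) (I : {set T}) : int :=
  match n with
  | 0 => 1 (* never reached *)
  | n'.+1 =>
      \prod_(C in comps g I)
        (if odd #|C| then 0
         else - \sum_(J in powerset C | J != C) sa_fuel n' g J)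
  end.

Definition sa (g : rel T) (I : {set T}) : int := sa_fuel #|I|.+1 g I.

(* a_i of the graph g|_V, for an integer index i (0 when i < 0) *)
Definition a_idx (g : rel T) (V : {set T}) (i : int) : nat :=
  match i with
  | Posz k => \sum_(I in powerset V | #|I| == k.*2) `|sa g I|%N
  | Negz _ => 0%N
  end.

Definition bnum (g : rel T) (J : {set T}) : int :=
  \sum_(I in powerset J) sa g I.

Definition EC (g : rel T) (I : {set T}) : bool :=
  [forall C in comps g I, ~~ odd #|C|].

Definition add_edge (g : rel T) (u v : T) : rel T :=
  [rel x y | [|| g x y, (x == u) && (y == v) | (x == v) && (y == u)]].

(* edge relation of the reconnected complement h^*_J; its vertex set is ~: J *)
Definition reconn (h : rel T) (J : {set T}) : rel T :=
  [rel a b | (a != b) && connect (rel_on h (J :|: [set a; b])) a b].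

End Graphs.

(* Main.v *)
Require Import Defs.
From mathcomp Require Import all_boot all_order all_algebra.
From mathcomp Require Import zify.
From Stdlib Require Import FunctionalExtensionality.
Set Implicit Arguments. Unset Strict Implicit. Unset Printing Implicit Defensive.
Import GRing.Theory Num.Theory.

Section Basic.
Variable T : finType.
Implicit Types (g h : rel T) (A B D I J K L W X C : {set T}).

Lemma connect_inv (e : rel T) (P : T -> Prop) x y :
  P x -> (forall a b, P a -> e a b -> P b) -> connect e x y -> P y.
Proof.
move=> Px step /connectP [p pth ->].
elim: p x Px pth => [|z p IH] x Px //= /andP [exz pth].
exact: IH (step _ _ Px exz) pth.
Qed.

Lemma rel_on_sym g I : symmetric g -> symmetric (rel_on g I).
Proof. by move=> sg x y; rewrite /rel_on /= sg; case: (x \in I); case: (y \in I). Qed.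

Definition comp g I x := [set y in I | connect (rel_on g I) x y].

Lemma compsE g I : comps g I = [set comp g I x | x in I]. Proof. by []. Qed.

Lemma connect_in g I x y : x \in I -> connect (rel_on g I) x y -> y \in I.
Proof.
move=> xI c; apply: (@connect_inv _ (fun z => z \in I) x y xI _ c) => a b _.
by case/and3P.
Qed.

Lemma connect_mono g X I x y : X \subset I ->
  connect (rel_on g X) x y -> connect (rel_on g I) x y.
Proof.
move=> XI; apply: connect_sub => a b /and3P [aX bX gab]; apply: connect1.
by rewrite /rel_on /= (subsetP XI _ aX) (subsetP XI _ bX).
Qed.

Lemma comps_partition g I : symmetric g -> partition (comps g I) I.
Proof.
move=> sg; apply: equivalence_partitionP => x y z _ _ _; split.
  exact: connect0.
have cs := sym_connect_sym (rel_on_sym I sg).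
move=> cxy; apply/idP/idP => [cxz|cyz]; last exact: connect_trans cxy cyz.
by apply: connect_trans cxz; rewrite cs.
Qed.

Lemma card_comps g I : symmetric g -> #|I| = \sum_(C in comps g I) #|C|.
Proof. by move=> sg; apply: card_partition; apply: comps_partition. Qed.

Lemma comp_mem g I x : x \in I -> x \in comp g I x.
Proof. by move=> xI; rewrite inE xI connect0. Qed.

Lemma comp_sub g I x : comp g I x \subset I.
Proof. by apply/subsetP => y; rewrite inE => /andP []. Qed.

Lemma comp_in g I x : x \in I -> comp g I x \in comps g I.
Proof. by move=> xI; apply: imset_f. Qed.

Lemma comp_eq g I x y : symmetric g -> y \in comp g I x -> comp g I y = comp g I x.
Proof.
move=> sg; rewrite inE => /andP [yI cxy]; have cs := sym_connect_sym (rel_on_sym I sg).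
apply/setP => z; rewrite !inE; case: (z \in I) => //=.
apply/idP/idP => [cyz|cxz]; first exact: connect_trans cxy cyz.
by apply: connect_trans cxz; rewrite cs.
Qed.

Lemma compsP g I C : C \in comps g I -> exists2 x, x \in I & C = comp g I x.
Proof. by case/imsetP => x xI ->; exists x. Qed.

Lemma comps_sub g I C : C \in comps g I -> C \subset I.
Proof. by case/compsP => x _ ->; apply: comp_sub. Qed.

Lemma comps_mem g I C x : symmetric g -> C \in comps g I -> x \in C -> C = comp g I x.
Proof. by move=> sg /compsP [y yI ->] xC; rewrite (comp_eq sg xC). Qed.

Lemma comps_n0 g I C : C \in comps g I -> exists x, x \in C.
Proof. by case/compsP => x xI ->; exists x; apply: comp_mem. Qed.

Definition closedin g I X := forall x y, x \in X -> y \in I -> g x y -> y \in X.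

Lemma comp_closed g I x : closedin g I (comp g I x).
Proof.
move=> a b; rewrite !inE => /andP [aI cxa] bI gab; rewrite bI /=.
by apply: connect_trans cxa (connect1 _); rewrite /rel_on /= aI bI.
Qed.

Lemma comps_closed g I C : C \in comps g I -> closedin g I C.
Proof. by case/compsP => x _ ->; apply: comp_closed. Qed.

Lemma comp_closed_sub g I X x : X \subset I -> closedin g I X -> x \in X ->
  comp g I x = comp g X x.
Proof.
move=> XI clX xX; apply/setP => y; rewrite !inE; apply/andP/andP => [[yI cxy]|[yX cxy]].
  apply: (@connect_inv _ (fun z => z \in X /\ connect (rel_on g X) x z) x y _ _ cxy).
    by split; [|apply: connect0].
  move=> a b [aX cxa] /and3P [aI bI gab]; have bX := clX _ _ aX bI gab.
  by split => //; apply: connect_trans cxa (connect1 _); rewrite /rel_on /= aX bX.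
by split; [apply: (subsetP XI) | apply: connect_mono cxy].
Qed.

Lemma comps_closed_sub g I X : X \subset I -> closedin g I X ->
  {subset comps g X <= comps g I}.
Proof.
move=> XI clX C /compsP [x xX ->]; rewrite -(comp_closed_sub XI clX xX).
by apply: comp_in; apply: (subsetP XI).
Qed.

Lemma ECP g I : reflect (forall C, C \in comps g I -> ~~ odd #|C|) (EC g I).
Proof. exact: forall_inP. Qed.

Lemma even_closed g I X : symmetric g -> X \subset I -> closedin g I X -> EC g I ->
  ~~ odd #|X|.
Proof.
move=> sg XI clX /ECP ecI; rewrite (card_comps X sg).
apply: (big_ind (fun n => ~~ odd n)) => //.
  by move=> a b oa ob; rewrite oddD (negbTE oa) (negbTE ob).
by move=> C /(comps_closed_sub XI clX) /ecI.
Qed.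

Lemma EC_even g I : symmetric g -> EC g I -> ~~ odd #|I|.
Proof. by move=> sg; apply: even_closed => //; move=> x y _ . Qed.


Lemma sa_fuel_eq n m g I : #|I| < n -> #|I| < m -> sa_fuel n g I = sa_fuel m g I.
Proof.
elim: n m I => [|n IH] [|m] I //= hn hm.
apply: eq_bigr => C CI; case: ifP => // _; congr (- _)%R.
apply: eq_bigr => J /andP [JC JnC]; apply: IH.
  have h1 : #|J| < #|C| by apply: proper_card; rewrite properEneq JnC -powersetE JC.
  have h2 : #|C| <= #|I| := subset_leq_card (comps_sub CI).
  lia.
have h1 : #|J| < #|C| by apply: proper_card; rewrite properEneq JnC -powersetE JC.
have h2 : #|C| <= #|I| := subset_leq_card (comps_sub CI).
lia.
Qed.

Definition body g C : int :=
  if odd #|C| then 0%R else (- \sum_(J in powerset C | J != C) sa g J)%R.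

Lemma saE g I : sa g I = (\prod_(C in comps g I) body g C)%R.
Proof.
rewrite /sa /=; apply: eq_bigr => C CI; rewrite /body; case: ifP => // _.
congr (- _)%R; apply: eq_bigr => J /andP [JC JnC]; rewrite /sa; apply: sa_fuel_eq => //.
have h1 : #|J| < #|C| by apply: proper_card; rewrite properEneq JnC -powersetE JC.
have h2 : #|C| <= #|I| := subset_leq_card (comps_sub CI).
lia.
Qed.

Lemma comps0 g : comps g set0 = set0.
Proof. by rewrite compsE imset0. Qed.

Lemma sa0 g : sa g set0 = 1%R.
Proof. by rewrite saE comps0 big_set0. Qed.

Lemma saN g I : ~~ EC g I -> sa g I = 0%R.
Proof.
move/forall_inPn => [C CI]; rewrite negbK => oC.
by rewrite saE (bigD1 C) //= /body oC mul0r.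
Qed.

Lemma comps_self g W C : symmetric g -> C \in comps g W -> comps g C = [set C].
Proof.
move=> sg CW; have [x0 x0W defC] := compsP CW.
have CsW := comps_sub CW; have clC := comps_closed CW.
have x0C : x0 \in C by rewrite defC comp_mem.
have eC : C = comp g C x0 by rewrite -(comp_closed_sub CsW clC x0C) -defC.
apply/setP => Z; rewrite inE; apply/idP/eqP => [|->].
  case/compsP => y yC ->; rewrite eC in yC; rewrite (comp_eq sg yC); exact/esym.
by rewrite [X in X \in _]eC; apply: comp_in.
Qed.

Lemma bnum_conn g C : comps g C = [set C] -> ~~ odd #|C| -> bnum g C = 0%R.
Proof.
move=> cC eC; rewrite /bnum (bigD1 C) ?powersetE //=.
by rewrite saE cC big_set1 /body (negbTE eC) addNr.
Qed.

Lemma disjP (U : finType) (A B : {set U}) : (forall x, x \in A -> x \in B -> False) -> [disjoint A & B].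
Proof.
move=> H; rewrite -setI_eq0; apply/eqP/setP => x; rewrite !inE.
by apply/andP => -[xA xB]; apply: (H x).
Qed.

Lemma sa_mul g A B : symmetric g -> (forall x, x \in A -> x \in B -> False) ->
  (forall a b, a \in A -> b \in B -> g a b = false) ->
  sa g (A :|: B) = (sa g A * sa g B)%R.
Proof.
move=> sg dAB ne.
have clA : closedin g (A :|: B) A.
  move=> x y xA; rewrite inE => /orP [//|yB]; by rewrite ne.
have clB : closedin g (A :|: B) B.
  move=> x y xB; rewrite inE => /orP [yA|//]; by rewrite sg ne.
have e : comps g (A :|: B) = comps g A :|: comps g B.
  rewrite !compsE imsetU; congr (_ :|: _); apply: eq_in_imset => x xA.
    exact: comp_closed_sub (subsetUl _ _) clA xA.
  exact: comp_closed_sub (subsetUr _ _) clB xA.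
rewrite !saE e -bigU /=; first by apply: eq_bigl => C; rewrite !inE.
apply: disjP => C CA CB.
have [x xC] := comps_n0 CA.
by apply: (dAB x); [apply: (subsetP (comps_sub CA)) | apply: (subsetP (comps_sub CB))].
Qed.

Lemma big_split_sub (R : Type) (idx : R) (op : Monoid.com_law idx)
   (F : {set T} -> R) C W : C \subset W ->
  \big[op/idx]_(I in powerset W) F I =
  \big[op/idx]_(A in powerset C) \big[op/idx]_(B in powerset (W :\: C)) F (A :|: B).
Proof.
move=> CW.
rewrite (partition_big (fun I => I :&: C) (fun A => A \in powerset C)); last first.
  by move=> I _; rewrite powersetE subsetIr.
apply: eq_bigr => A; rewrite powersetE => AC.
rewrite -(big_imset (h := fun B => A :|: B)) /=; last first.
  move=> B1 B2; rewrite !powersetE => B1s B2s e; apply/setP => x.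
  have := congr1 (fun S : {set T} => x \in S) e; rewrite /= !inE.
  case xA: (x \in A) => //= _.
  have xC : x \in C by apply: (subsetP AC).
  have f1 : (x \in B1) = false by apply/negP => /(subsetP B1s); rewrite inE xC.
  have f2 : (x \in B2) = false by apply/negP => /(subsetP B2s); rewrite inE xC.
  by rewrite f1 f2.
apply: eq_bigl => I; rewrite powersetE; apply/andP/imsetP => [[IW /eqP IC]|[B]].
  exists (I :\: C); first by rewrite powersetE; apply: setSD.
  apply/setP => x; rewrite !inE -IC inE.
  by case: (x \in I); case: (x \in C).
rewrite powersetE => BW ->; split.
  apply/subsetP => x; rewrite inE => /orP [/(subsetP AC)/(subsetP CW)//|/(subsetP BW)].
  by rewrite inE => /andP [].
apply/eqP/setP => x; rewrite !inE.
case xC: (x \in C); last by rewrite andbF; symmetry; apply/negP => /(subsetP AC); rewrite xC.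
rewrite andbT; case: (x \in A) => //=.
by apply/negP => /(subsetP BW); rewrite inE xC.
Qed.

Lemma big_supset (R : Type) (idx : R) (op : Monoid.com_law idx)
   (F : {set T} -> R) J I : J \subset I ->
  \big[op/idx]_(K in powerset I | J \subset K) F K =
  \big[op/idx]_(L in powerset (I :\: J)) F (J :|: L).
Proof.
move=> JI.
rewrite -(big_imset (h := fun L => J :|: L)) /=; last first.
  move=> B1 B2; rewrite !powersetE => B1s B2s e; apply/setP => x.
  have := congr1 (fun S : {set T} => x \in S) e; rewrite /= !inE.
  case xA: (x \in J) => //= _.
  have f1 : (x \in B1) = false by apply/negP => /(subsetP B1s); rewrite inE xA.
  have f2 : (x \in B2) = false by apply/negP => /(subsetP B2s); rewrite inE xA.
  by rewrite f1 f2.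
apply: eq_bigl => K; rewrite powersetE; apply/andP/imsetP => [[KI JK]|[B]].
  exists (K :\: J); first by rewrite powersetE; apply: setSD.
  apply/setP => x; rewrite !inE; move: (subsetP JK x).
  by case: (x \in K); case: (x \in J) => // ->.
rewrite powersetE => BW ->; split; last exact: subsetUl.
apply/subsetP => x; rewrite inE => /orP [/(subsetP JI)//|/(subsetP BW)].
by rewrite inE => /andP [].
Qed.

Lemma big_exchange_sub (R : Type) (idx : R) (op : Monoid.com_law idx) I
   (P : pred {set T}) (F : {set T} -> {set T} -> R) :
  \big[op/idx]_(K in powerset I) \big[op/idx]_(J in powerset K | P J) F J K =
  \big[op/idx]_(J in powerset I | P J)
      \big[op/idx]_(L in powerset (I :\: J)) F J (J :|: L).
Proof.
transitivity (\big[op/idx]_(K in powerset I)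
   \big[op/idx]_(J | (J \in powerset I) && (P J && (J \subset K))) F J K).
  apply: eq_bigr => K; rewrite powersetE => KI; apply: eq_bigl => J; rewrite !powersetE.
  case JK: (J \subset K); last by rewrite !andbF.
  by rewrite (subset_trans JK KI) andbT.
rewrite (exchange_big_dep (fun J => (J \in powerset I) && P J)) /=; last first.
  by move=> K J _ /and3P [-> ->].
apply: eq_bigr => J /andP [JI PJ]; rewrite -big_supset -?powersetE //.
apply: eq_bigl => K; by rewrite JI PJ.
Qed.

Lemma bnum0 g W C : symmetric g -> C \in comps g W -> ~~ odd #|C| -> bnum g W = 0%R.
Proof.
move=> sg CW eC; have CsW := comps_sub CW; have clC := comps_closed CW.
rewrite /bnum (big_split_sub _ _ CsW).
transitivity (\sum_(A in powerset C) \sum_(B in powerset (W :\: C)) (sa g A * sa g B))%R.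
  apply: eq_bigr => A; rewrite powersetE => AC; apply: eq_bigr => B; rewrite powersetE => BW.
  apply: sa_mul => //.
    move=> x /(subsetP AC) xC /(subsetP BW); by rewrite inE xC.
  move=> a b /(subsetP AC) aC /(subsetP BW); rewrite inE => /andP [bnC bW].
  apply/negP => gab; by rewrite (clC _ _ aC bW gab) in bnC.
under eq_bigr do rewrite -big_distrr.
rewrite -big_distrl /= -/(bnum g C) (bnum_conn (comps_self sg CW) eC).
by rewrite mul0r.
Qed.

Lemma bnumEC g W : symmetric g -> EC g W -> W != set0 -> bnum g W = 0%R.
Proof.
move=> sg /ECP ec /set0Pn [x xW].
exact: bnum0 sg (comp_in g xW) (ec _ (comp_in g xW)).
Qed.


Lemma add_edge_sym g u v : symmetric g -> symmetric (add_edge g u v).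
Proof.
move=> sg x y; rewrite /add_edge /= sg.
by case: (x == u); case: (y == v); case: (x == v); case: (y == u); rewrite /= ?orbT ?orbF.
Qed.

Lemma reconn_sym h J : symmetric h -> symmetric (reconn h J).
Proof.
move=> sh x y; rewrite /reconn /= eq_sym setUC [[set y; x]]setUC.
by rewrite (sym_connect_sym (rel_on_sym _ sh)) setUC.
Qed.

Lemma add_edge_sub g u v a b : g a b -> add_edge g u v a b.
Proof. by rewrite /add_edge /= => ->. Qed.

Lemma conn_add_same g u v W x y : symmetric g ->
  (u \notin W) || (v \notin W) || connect (rel_on g W) u v ->
  connect (rel_on (add_edge g u v) W) x y = connect (rel_on g W) x y.
Proof.
move=> sg H; apply/idP/idP; last first.
  apply: connect_sub => a b /and3P [aW bW gab]; apply: connect1.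
  by rewrite /rel_on /= aW bW add_edge_sub.
move=> c; apply: (@connect_inv _ (fun z => connect (rel_on g W) x z) x y _ _ c).
  exact: connect0.
move=> a b cxa /and3P [aW bW]; rewrite /add_edge /= => /or3P [gab|/andP [/eqP au /eqP bv]|/andP [/eqP av /eqP bu]].
- by apply: connect_trans cxa (connect1 _); rewrite /rel_on /= aW bW gab.
- subst a b; rewrite aW bW /= in H; exact: connect_trans cxa H.
- subst a b; rewrite aW bW /= in H; apply: connect_trans cxa _.
  by rewrite (sym_connect_sym (rel_on_sym _ sg)).
Qed.

Lemma comps_add_same g u v W : symmetric g ->
  (u \notin W) || (v \notin W) || connect (rel_on g W) u v ->
  comps (add_edge g u v) W = comps g W.
Proof.
move=> sg H; rewrite !compsE; apply: eq_imset => x; apply/setP => y.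
by rewrite !inE conn_add_same.
Qed.

Lemma EC_add g u v I : symmetric g -> EC g I -> EC (add_edge g u v) I.
Proof.
move=> sg ecI; apply/ECP => C CI; apply: (even_closed sg (comps_sub CI)) => //.
move=> a b aC bI gab; exact: comps_closed CI a b aC bI (add_edge_sub u v gab).
Qed.

Lemma comp_add_merge g u v W : symmetric g -> u \in W -> v \in W ->
  comp (add_edge g u v) W u = comp g W u :|: comp g W v.
Proof.
move=> sg uW vW; set h := add_edge g u v.
have cuv : connect (rel_on h W) u v.
  by apply: connect1; rewrite /rel_on /= uW vW /h /add_edge /= !eqxx orbT.
apply/setP => y; apply/idP/idP => [|].
  rewrite inE => /andP [yW c].
  apply: (@connect_inv _ (fun z => z \in comp g W u :|: comp g W v) u y _ _ c).
    by rewrite inE comp_mem.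
  move=> a b; rewrite inE => aC /and3P [aW bW].
  rewrite /h /add_edge /= => /or3P [gab|/andP [_ /eqP ->]|/andP [_ /eqP ->]].
  + by case/orP: aC => aC; rewrite inE (comp_closed aC bW gab) ?orbT.
  + by rewrite inE comp_mem ?orbT.
  + by rewrite inE comp_mem.
rewrite inE => /orP [|]; rewrite inE => /andP [yW c]; rewrite inE yW /=.
  move: c; apply: connect_sub => a b /and3P [aW bW gab].
  by apply: connect1; rewrite /rel_on /= aW bW; exact: add_edge_sub.
apply: connect_trans cuv _; move: c; apply: connect_sub => a b /and3P [aW bW gab].
by apply: connect1; rewrite /rel_on /= aW bW; exact: add_edge_sub.
Qed.

Lemma comp_add_avoid g u v W x : symmetric g -> x \in W ->
  u \notin comp g W x -> v \notin comp g W x ->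
  closedin (add_edge g u v) W (comp g W x).
Proof.
move=> sg xW nu nv a b aC bW; rewrite /add_edge /=.
case/or3P => [gab|/andP [/eqP au _]|/andP [/eqP av _]].
- exact: comp_closed aC bW gab.
- by subst a; rewrite aC in nu.
- by subst a; rewrite aC in nv.
Qed.

Definition oddc g W := #|[set C in comps g W | odd #|C|]|.

Lemma new_EC g u v J : symmetric g -> EC (add_edge g u v) J -> ~~ EC g J ->
  [/\ u \in J, v \in J, ~~ connect (rel_on g J) u v & oddc g J = 2].
Proof.
move=> sg ech nec; set h := add_edge g u v.
have sh : symmetric h := add_edge_sym u v sg.
have [uJ vJ ncuv] : [/\ u \in J, v \in J & ~~ connect (rel_on g J) u v].
  case: (boolP ((u \notin J) || (v \notin J) || connect (rel_on g J) u v)) => H.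
    have e : EC h J = EC g J by rewrite /h /EC (comps_add_same sg H).
    by rewrite e (negbTE nec) in ech.
  by move: H; rewrite !negb_or !negbK => /andP [/andP [a b] c]; split.
set Cu := comp g J u; set Cv := comp g J v.
have vCu : v \notin Cu by rewrite inE vJ.
have uCv : u \notin Cv.
  rewrite inE uJ /=; apply: contra ncuv; by rewrite (sym_connect_sym (rel_on_sym _ sg)).
have disj x : x \in Cu -> x \in Cv -> False.
  move=> xu xv; have := comp_eq sg xu; have := comp_eq sg xv.
  move=> -> e; by move: vCu; rewrite /Cu -e /Cv comp_mem.
have other C : C \in comps g J -> C != Cu -> C != Cv -> ~~ odd #|C|.
  case/compsP => x xJ -> nu nv.
  have nuC : u \notin comp g J x.
    by apply/negP => /(comp_eq sg) e; move: nu; rewrite -e eqxx.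
  have nvC : v \notin comp g J x.
    by apply/negP => /(comp_eq sg) e; move: nv; rewrite -e eqxx.
  exact: even_closed sh (comp_sub _ _ _) (comp_add_avoid sg xJ nuC nvC) ech.
have eU : ~~ odd #|Cu :|: Cv|.
  rewrite -comp_add_merge //; apply/(ECP _ _ ech); exact: comp_in.
have cU : #|Cu :|: Cv| = #|Cu| + #|Cv|.
  by rewrite cardsU (_ : Cu :&: Cv = set0) ?cards0 ?subn0 //; apply/setP => x;
     rewrite in_setI in_set0; apply/negbTE/andP => -[]; apply: disj.
have oCu : odd #|Cu|.
  apply: contraR nec => eCu; apply/ECP => C CJ.
  case: (eqVneq C Cu) => [->//|nu]; case: (eqVneq C Cv) => [->|nv]; last exact: other.
  by move: eU; rewrite cU oddD (negbTE eCu).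
have oCv : odd #|Cv| by move: eU; rewrite cU oddD oCu; case: (odd #|Cv|).
split => //; rewrite /oddc (_ : [set C in comps g J | odd #|C|] = [set Cu; Cv]).
  rewrite cards2; case: eqVneq => // e; by move: vCu; rewrite e comp_mem.
apply/setP => C; rewrite !inE; apply/andP/orP => [[CJ oC]|].
  apply/orP; move: (other C CJ); case: (C == Cu) => //; case: (C == Cv) => //.
  by rewrite oC => /(_ isT isT).
by case => /eqP ->; split => //; apply: comp_in.
Qed.


Section Reconn.
Variables (h : rel T) (J L : {set T}).
Hypothesis sh : symmetric h.
Hypothesis dJL : forall z, z \in L -> z \in J -> False.

Lemma reconn_connect x y : x \in L -> y \in L ->
  connect (rel_on (reconn h J) L) x y = connect (rel_on h (J :|: L)) x y.
Proof.
move=> xL yL; apply/idP/idP.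
  apply: connect_sub => a b /and3P [aL bL]; rewrite /reconn /= => /andP [_ c].
  apply: connect_mono c; apply/subsetP => z; rewrite !inE.
  by case/or3P => [->//|/eqP->|/eqP->]; rewrite ?aL ?bL orbT.
move=> c.
pose P z := exists2 w, w \in L & connect (rel_on (reconn h J) L) x w /\
   ((z \in L -> z = w) /\ (z \in J -> connect (rel_on h (J :|: [set w])) w z)).
suff [w wL [cxw [e _]]] : P y by rewrite (e yL).
apply: (@connect_inv _ P x y _ _ c).
  exists x; first exact: xL.
  split; first exact: connect0.
  by split => // xJ; exfalso; exact: dJL xL xJ.
move=> a b [w wL [cxw [ha hj]]] /and3P [aJL bJL hab].
rewrite inE in aJL; rewrite inE in bJL.
case/orP: aJL => [aJ|aL].
  have cwa := hj aJ.
  case/orP: bJL => [bJ|bL].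
    exists w => //; split => //; split => [bL|_]; first by exfalso; exact: dJL bL bJ.
    apply: connect_trans cwa (connect1 _); by rewrite /rel_on /= !inE aJ bJ hab.
  case: (eqVneq b w) => [->|nbw].
    exists w => //; split => //; split => // wJ; by exfalso; exact: dJL wL wJ.
  exists b => //; split; last by split => // bJ; exfalso; exact: dJL bL bJ.
  apply: connect_trans cxw (connect1 _); rewrite /rel_on /= wL bL /reconn /= eq_sym nbw /=.
  apply: connect_trans (connect_mono _ cwa) (connect1 _).
    by apply/subsetP => z; rewrite !inE => /orP [->//|/eqP ->]; rewrite eqxx orbT.
  by rewrite /rel_on /= !inE aJ eqxx !orbT hab.
have aw := ha aL; subst w.
case/orP: bJL => [bJ|bL].
  exists a => //; split => //; split => [bL|_]; first by exfalso; exact: dJL bL bJ.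
  by apply: connect1; rewrite /rel_on /= !inE bJ eqxx orbT hab.
case: (eqVneq a b) => [<-|nab].
  exists a => //; split => //; split => // aJ; by exfalso; exact: dJL aL aJ.
exists b => //; split; last by split => // bJ; exfalso; exact: dJL bL bJ.
apply: connect_trans cxw (connect1 _); rewrite /rel_on /= aL bL /reconn /= nab /=.
by apply: connect1; rewrite /rel_on /= !inE !eqxx !orbT hab.
Qed.

Lemma reconn_comp x : x \in L -> comp (reconn h J) L x = comp h (J :|: L) x :&: L.
Proof.
move=> xL; apply/setP => y; rewrite !inE.
case yL: (y \in L); last by rewrite andbF.
by rewrite reconn_connect // orbT andbT.
Qed.

Hypothesis ecJ : EC h J.

Lemma comp_evenJ z : ~~ odd #|comp h (J :|: L) z :&: J|.
Proof.
apply: (even_closed sh (subsetIr _ _) _ ecJ) => a b; rewrite inE => /andP [aK aJ] bJ hab.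
rewrite inE bJ andbT; apply: comp_closed aK _ hab; by rewrite inE bJ.
Qed.

Lemma odd_compL z : odd #|comp h (J :|: L) z| = odd #|comp h (J :|: L) z :&: L|.
Proof.
rewrite -(cardsID J (comp h (J :|: L) z)) oddD (negbTE (comp_evenJ z)) /=.
rewrite (_ : comp h (J :|: L) z :\: J = comp h (J :|: L) z :&: L) //.
apply/setP => y; rewrite !inE.
case yJ: (y \in J); case yL: (y \in L); rewrite /= ?andbT ?andbF //.
by exfalso; exact: dJL yL yJ.
Qed.

Lemma EC_reconn : EC (reconn h J) L = EC h (J :|: L).
Proof.
apply/ECP/ECP => H C.
  case/compsP => z zJL ->; rewrite odd_compL.
  case: (eqVneq (comp h (J :|: L) z :&: L) set0) => [->|/set0Pn [y]]; first by rewrite cards0.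
  rewrite inE => /andP [yK yL]; rewrite -(comp_eq sh yK) -reconn_comp //.
  by apply: H; apply: comp_in.
case/compsP => x xL ->; rewrite reconn_comp // -odd_compL; apply: H.
by apply: comp_in; rewrite inE xL orbT.
Qed.

Lemma oddc_reconn : (forall C, C \in comps h (J :|: L) -> odd #|C|) ->
  oddc (reconn h J) L = oddc h (J :|: L).
Proof.
move=> allodd.
have e1 : [set C in comps h (J :|: L) | odd #|C|] = comps h (J :|: L).
  apply/setP => C; rewrite inE; case CS: (C \in comps h (J :|: L)) => //=; exact: allodd.
have eimg : comps (reconn h J) L = [set K :&: L | K in comps h (J :|: L)].
  apply/setP => C; apply/idP/imsetP.
    case/compsP => x xL ->; exists (comp h (J :|: L) x); last exact: reconn_comp.
    by apply: comp_in; rewrite inE xL orbT.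
  move=> [K KS ->]; case/compsP: (KS) => z zJL eK.
  have : odd #|K| by apply: allodd.
  rewrite eK odd_compL; case: (eqVneq (comp h (J :|: L) z :&: L) set0) => [->|/set0Pn [y]].
    by rewrite cards0.
  rewrite inE => /andP [yK yL] _; rewrite -(comp_eq sh yK) -reconn_comp //.
  exact: comp_in.
have e2 : [set C in comps (reconn h J) L | odd #|C|] = comps (reconn h J) L.
  apply/setP => C; rewrite inE; case CS: (C \in comps (reconn h J) L) => //=.
  case/compsP: CS => x xL ->; rewrite reconn_comp // -odd_compL; apply: allodd.
  by apply: comp_in; rewrite inE xL orbT.
rewrite /oddc e1 e2 eimg card_in_imset // => K1 K2 K1S K2S e.
have : odd #|K1| by apply: allodd.
case/compsP: (K1S) => z zJL eK; rewrite eK odd_compL.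
case: (eqVneq (comp h (J :|: L) z :&: L) set0) => [->|/set0Pn [y]]; first by rewrite cards0.
rewrite -eK => yK1 _; have yK2 : y \in K2 by move: yK1; rewrite e inE => /andP [].
rewrite inE in yK1; case/andP: yK1 => yK1 _.
by rewrite (comps_mem sh K1S yK1) (comps_mem sh K2S yK2).
Qed.

End Reconn.


Lemma EC0 g : EC g set0.
Proof. by apply/ECP => C; rewrite comps0 inE. Qed.

Lemma bnum_set0 g : bnum g set0 = 1%R.
Proof. by rewrite /bnum powerset0 big_set1 sa0. Qed.

Lemma setDvv I : I :\: I = set0.
Proof. by apply/setP => x; rewrite !inE andNb. Qed.

Lemma setUDK J I : J \subset I -> J :|: (I :\: J) = I.
Proof.
move=> JI; apply/setP => x; rewrite !inE; have := subsetP JI x.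
by case: (x \in J); case: (x \in I) => // /(_ isT).
Qed.

Lemma setUDK2 J I L : L \subset I :\: J -> (J :|: L) :\: J = L.
Proof.
move=> LI; apply/setP => x; rewrite !inE; have := subsetP LI x; rewrite inE.
by case: (x \in J); case: (x \in L) => //= /(_ isT).
Qed.

Lemma disjD J I z : z \in I :\: J -> z \in J -> False.
Proof. by move=> zD zJ; move: zD; rewrite inE zJ. Qed.

Lemma sa_unique g (f : {set T} -> int) : symmetric g ->
  (forall I, ~~ EC g I -> f I = 0%R) -> f set0 = 1%R ->
  (forall I, EC g I -> I != set0 -> (\sum_(K in powerset I) f K = 0)%R) ->
  forall I, f I = sa g I.
Proof.
move=> sg f0 f1 fs I; have [n] := ubnP #|I|; elim: n I => // n IH I hI.
case ecI: (EC g I); last by rewrite f0 ?ecI // saN ?ecI.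
case: (eqVneq I set0) => [->|In0]; first by rewrite f1 sa0.
have e1 := fs I ecI In0; have e2 := bnumEC sg ecI In0; rewrite /bnum in e2.
rewrite (bigD1 I) ?powersetE //= in e1; rewrite (bigD1 I) ?powersetE //= in e2.
have e3 : (\sum_(K in powerset I | K != I) f K = \sum_(K in powerset I | K != I) sa g K)%R.
  apply: eq_bigr => K /andP [KI KnI]; apply: IH.
  have : #|K| < #|I| by apply: proper_card; rewrite properEneq KnI -powersetE KI.
  lia.
apply: (addIr (\sum_(K in powerset I | K != I) sa g K)%R).
by rewrite -{1}e3 e1 e2.
Qed.

Section Rec.
Variables (g : rel T) (u v : T).
Hypothesis sg : symmetric g.
Local Notation h := (add_edge g u v).
Local Notation N J := (EC h J && ~~ EC g J).

Let sh : symmetric h := add_edge_sym u v sg.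

Definition Fr I : int :=
  (sa g I - \sum_(J in powerset I | N J) bnum g J * sa (reconn h J) (I :\: J))%R.

Lemma Fr_sum I : (\sum_(K in powerset I) Fr K =
  bnum g I - \sum_(J in powerset I | N J) bnum g J * bnum (reconn h J) (I :\: J))%R.
Proof.
rewrite /Fr sumrB; congr (_ - _)%R.
rewrite (big_exchange_sub _ I (fun J => N J) (fun J K => bnum g J * sa (reconn h J) (K :\: J))%R).
apply: eq_bigr => J _; rewrite /bnum big_distrr /=; apply: eq_bigr => L.
by rewrite powersetE => LI; rewrite (setUDK2 LI).
Qed.

Lemma sa_rec I : sa h I = Fr I.
Proof.
symmetry; apply: (sa_unique (f := Fr) sh) => {I}.
- move=> I necI; rewrite /Fr saN; last first.
    by apply: contra necI; apply: EC_add.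
  rewrite big1 ?subr0 // => J /andP [JI /andP [ecJ _]].
  rewrite saN ?mulr0 //; rewrite powersetE in JI.
  by rewrite EC_reconn // ?setUDK //; exact: disjD.
- rewrite /Fr sa0 big1 ?subr0 // => J /andP []; rewrite powersetE subset0 => /eqP ->.
  by rewrite !EC0.
- move=> I ecI In0; rewrite Fr_sum.
  case NI: (N I).
    rewrite (bigD1 I); last by rewrite powersetE subxx NI.
    rewrite /=.
    have -> : bnum (reconn h I) (I :\: I) = 1%R by rewrite setDvv bnum_set0.
    rewrite mulr1 big1 ?addr0 ?subrr //.
    move=> J /andP [/andP [JI /andP [ecJ _]] JnI]; rewrite powersetE in JI.
    rewrite (bnumEC (reconn_sym J sh)) ?mulr0 //.
      by rewrite EC_reconn ?setUDK //; exact: disjD.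
    apply: contra JnI => /eqP e; apply/eqP/setP => x; rewrite -(setUDK JI) inE.
    by rewrite e inE orbF.
  have ecgI : EC g I by move: NI; rewrite ecI /=; case: (EC g I).
  rewrite (bnumEC sg ecgI In0) big1 ?subrr // => J /andP [JI /andP [ecJ necJ]].
  rewrite powersetE in JI; rewrite (bnumEC (reconn_sym J sh)) ?mulr0 //.
    by rewrite EC_reconn ?setUDK //; exact: disjD.
  apply: contraNneq necJ => e; suff -> : J = I by [].
  by rewrite -(setUDK JI) e setU0.
Qed.

Lemma bnum_rec I : bnum h I =
  (bnum g I - \sum_(J in powerset I | N J) bnum g J * bnum (reconn h J) (I :\: J))%R.
Proof. rewrite -Fr_sum /bnum; apply: eq_bigr => K _; exact: sa_rec. Qed.

End Rec.


Lemma oddc_le g W : symmetric g -> oddc g W <= #|W|.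
Proof.
move=> sg; apply: (@leq_trans #|comps g W|).
  by apply: subset_leq_card; apply/subsetP => C; rewrite inE => /andP [].
rewrite (card_comps W sg) -sum1_card; apply: leq_sum => C CW.
by have [x xC] := comps_n0 CW; rewrite card_gt0; apply/set0Pn; exists x.
Qed.

Lemma comp_disj g W x y z : symmetric g -> ~~ connect (rel_on g W) x y ->
  z \in comp g W x -> z \in comp g W y -> False.
Proof.
move=> sg ncxy; rewrite !inE => /andP [_ cxz] /andP [_ cyz]; move/negP: ncxy; apply.
by apply: connect_trans cxz _; rewrite (sym_connect_sym (rel_on_sym _ sg)).
Qed.

Lemma comp_nil g W x : (forall a b, g a b = false) -> x \in W -> comp g W x = [set x].
Proof.
move=> g0 xW; apply/setP => y; rewrite !inE; apply/andP/eqP => [[yW c]|->].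
  apply: (@connect_inv _ (fun z => z = x) x y _ _ c) => // a b _.
  by rewrite /rel_on /= g0 !andbF.
by rewrite xW connect0.
Qed.

Definition sgn (n : nat) : int := ((-1) ^+ n./2)%R.

Definition ne g := #|[set p : T * T | g p.1 p.2]|.

Lemma ne_le g : ne g <= #|T| * #|T|.
Proof. by rewrite -card_prod; apply: max_card. Qed.

Lemma signs_nil g W : symmetric g -> (forall a b, g a b = false) ->
  (0 <= sgn #|W| * sa g W)%R /\ (0 <= sgn (#|W| - oddc g W) * bnum g W)%R.
Proof.
move=> sg g0.
have saz I : I != set0 -> sa g I = 0%R.
  case/set0Pn => x xI; apply: saN; apply/negP => /ECP /(_ [set x]).
  rewrite cards1 => H; have : ~~ odd 1 by apply: H; rewrite -(comp_nil g0 xI); exact: comp_in.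
  by [].
split.
  case: (eqVneq W set0) => [->|Wn0]; first by rewrite sa0 cards0 /sgn expr0 mulr1.
  by rewrite saz // mulr0.
have -> : bnum g W = 1%R.
  rewrite /bnum (bigD1 set0) ?powersetE ?sub0set //= sa0 big1 ?addr0 // => I /andP [_].
  exact: saz.
have -> : oddc g W = #|W|.
  rewrite /oddc (_ : [set C in comps g W | odd #|C|] = [set [set x] | x in W]).
    by rewrite card_imset //; apply: set1_inj.
  apply/setP => C; rewrite inE compsE; apply/andP/idP => [[/imsetP [x xW ->] _]|].
    by rewrite comp_nil //; apply: imset_f.
  case/imsetP => x xW ->; rewrite cards1; split => //.
  by rewrite -(comp_nil g0 xW); apply: imset_f.
by rewrite subnn /sgn expr0 mulr1.
Qed.


Lemma meas1 x w a b M : x <= w -> a < b -> x * M + a < w * M + b.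
Proof. move=> xw ab; rewrite -addnS; apply: leq_add => //; by rewrite leq_mul2r xw orbT. Qed.

Lemma meas2 x w a b M : x < w -> a < M -> x * M + a < w * M + b.
Proof. move=> xw aM; nia. Qed.

Lemma signs g W : symmetric g ->
  (0 <= sgn #|W| * sa g W)%R /\ (0 <= sgn (#|W| - oddc g W) * bnum g W)%R.
Proof.
pose M := (#|T| * #|T|).+1.
move=> sg; have [n] := ubnP (#|W| * M + ne g).
elim: n g W sg => // n IH g W sg hlt.
have IHg : forall g' X, symmetric g' -> #|X| * M + ne g' < #|W| * M + ne g ->
   (0 <= sgn #|X| * sa g' X)%R /\ (0 <= sgn (#|X| - oddc g' X) * bnum g' X)%R.
  move=> g' X sg' lt; apply: IH => //; apply: leq_trans lt _; by rewrite -ltnS.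
have neM g' : ne g' < M by rewrite ltnS ne_le.
have [g0|[p gp]] : (forall a b, g a b = false) \/ exists p : T * T, g p.1 p.2.
  case: (pickP [pred p : T * T | g p.1 p.2]) => [p gp|none]; first by right; exists p.
  by left => a b; exact: (none (a, b)).
  exact: signs_nil.
set u := p.1; set v := p.2.
pose g' : rel T := fun a b => g a b && ~~ (((a == u) && (b == v)) || ((a == v) && (b == u))).
have sg' : symmetric g'.
  move=> a b; rewrite /g' sg; congr (_ && ~~ _).
  by case: (a == u); case: (b == v); case: (a == v); case: (b == u); rewrite /= ?orbT ?orbF.
have eg : g = add_edge g' u v.
  apply: FunctionalExtensionality.functional_extensionality => a.
  apply: FunctionalExtensionality.functional_extensionality => b.
  rewrite /add_edge /g' /=.
  case A1: ((a == u) && (b == v)); case B1: ((a == v) && (b == u));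
    rewrite /= ?andbT ?andbF ?orbT ?orbF //.
  - by move: A1 => /andP [/eqP -> /eqP ->].
  - by move: A1 => /andP [/eqP -> /eqP ->].
  - by move: B1 => /andP [/eqP -> /eqP ->]; rewrite sg.
have neg : ne g' < ne g.
  apply: proper_card; apply/properP; split.
    by apply/subsetP => q; rewrite !inE => /andP [].
  exists p; first by rewrite inE.
  by rewrite inE /g' -/u -/v !eqxx /= andbF.
have IH1 X : #|X| <= #|W| ->
   (0 <= sgn #|X| * sa g' X)%R /\ (0 <= sgn (#|X| - oddc g' X) * bnum g' X)%R.
  by move=> XW; apply: IHg => //; apply: meas1.
have IH2 h' X : symmetric h' -> #|X| < #|W| ->
   (0 <= sgn #|X| * sa h' X)%R /\ (0 <= sgn (#|X| - oddc h' X) * bnum h' X)%R.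
  by move=> sh' XW; apply: IHg => //; apply: meas2.
rewrite eg; set h := add_edge g' u v.
have sh : symmetric h := add_edge_sym u v sg'.
have newJ J : J \subset W -> EC h J -> ~~ EC g' J ->
   [/\ 0 < #|J|, ~~ odd #|J|, #|W :\: J| < #|W| & (0 <= sgn (#|J| - 2) * bnum g' J)%R].
  move=> JW ecJ necJ; have [uJ _ _ oc2] := new_EC sg' ecJ necJ.
  have J0 : 0 < #|J| by rewrite card_gt0; apply/set0Pn; exists u.
  split => //; first exact: EC_even sh ecJ.
    by rewrite cardsDS //; have := subset_leq_card JW; lia.
  by rewrite -oc2; apply: (IH1 J (subset_leq_card JW)).2.
split.
  rewrite (sa_rec u v sg') /Fr [X in (0 <= X)%R]mulrBr mulr_sumr -sumrN; apply: addr_ge0.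
    exact: (IH1 W (leqnn _)).1.
  apply: sumr_ge0 => J /andP [JW /andP [ecJ necJ]]; rewrite powersetE in JW.
  have [J0 eJ ltW hb] := newJ J JW ecJ necJ.
  have hs := (IH2 _ (W :\: J) (reconn_sym J sh) ltW).1.
  have e : #|W|./2 = ((#|J| - 2)./2 + #|W :\: J|./2).+1.
    by rewrite cardsDS //; have := subset_leq_card JW; lia.
  rewrite /sgn e exprS exprD mulN1r -/(sgn _) -/(sgn _) mulNr opprK mulrACA.
  exact: mulr_ge0.
case: (boolP [forall C in comps h W, odd #|C|]) => [/forall_inP allodd|].
  rewrite (bnum_rec u v sg') [X in (0 <= X)%R]mulrBr [X in (_ - X)%R]mulr_sumr -sumrN; apply: addr_ge0.
    case H : ((u \notin W) || (v \notin W) || connect (rel_on g' W) u v).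
      by rewrite /oddc (comps_add_same sg' H); exact: (IH1 W (leqnn _)).2.
    move/negbT: H; rewrite !negb_or !negbK => /andP [/andP [uW vW] ncuv].
    have oU := allodd _ (comp_in h uW); rewrite (comp_add_merge sg' uW vW) in oU.
    have cU : #|comp g' W u :|: comp g' W v| = #|comp g' W u| + #|comp g' W v|.
      rewrite cardsU (_ : comp g' W u :&: comp g' W v = set0) ?cards0 ?subn0 //.
      apply/setP => x; rewrite in_setI in_set0; apply/negbTE/andP => -[].
      exact: comp_disj.
    rewrite cU oddD in oU.
    have : ~~ odd #|comp g' W u| || ~~ odd #|comp g' W v|.
      by move: oU; case: (odd _); case: (odd _).
    case/orP => ev.
      by rewrite (bnum0 sg' (comp_in g' uW) ev) mulr0.
    by rewrite (bnum0 sg' (comp_in g' vW) ev) mulr0.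
  apply: sumr_ge0 => J /andP [JW /andP [ecJ necJ]]; rewrite powersetE in JW.
  have [J0 eJ ltW hb] := newJ J JW ecJ necJ.
  have dJ : forall z, z \in W :\: J -> z \in J -> False by move=> z; exact: disjD.
  have ok := oddc_reconn sh dJ ecJ.
  rewrite setUDK // in ok; have {}ok := ok allodd.
  have hs := (IH2 _ (W :\: J) (reconn_sym J sh) ltW).2; rewrite ok in hs.
  have kle : oddc h W <= #|W :\: J| by rewrite -ok; apply: oddc_le; exact: reconn_sym.
  have e : (#|W| - oddc h W)./2 = ((#|J| - 2)./2 + (#|W :\: J| - oddc h W)./2).+1.
    move: kle; rewrite cardsDS //; have := subset_leq_card JW; lia.
  rewrite /sgn e exprS exprD mulN1r -/(sgn _) -/(sgn _) mulNr opprK mulrACA.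
  exact: mulr_ge0.
move/forall_inPn => [C CW eC].
by rewrite (bnum0 sh CW eC) mulr0.
Qed.


Lemma absE (x : int) n : (0 <= sgn n * x)%R -> Posz (`|x|%N) = (sgn n * x)%R.
Proof. move=> H; by rewrite abszE -(ger0_norm H) normrM /sgn normrX normrN1 expr1n mul1r. Qed.

Lemma abs_rec g u v I : symmetric g ->
  `|sa (add_edge g u v) I|%N = (`|sa g I| +
    \sum_(J in powerset I | EC (add_edge g u v) J && ~~ EC g J)
       `|bnum g J| * `|sa (reconn (add_edge g u v) J) (I :\: J)|)%N.
Proof.
move=> sg; have sh : symmetric (add_edge g u v) := add_edge_sym u v sg.
apply/eqP; rewrite -eqz_nat; apply/eqP.
rewrite (absE (signs I sh).1) PoszD (absE (signs I sg).1) (big_morph Posz PoszD (erefl (Posz 0))).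
rewrite (sa_rec u v sg) /Fr [LHS]mulrBr [X in (_ - X)%R]mulr_sumr -sumrN; congr (_ + _)%R.
apply: eq_bigr => J /andP [JI /andP [ecJ necJ]]; rewrite powersetE in JI.
have [uJ _ _ oc2] := new_EC sg ecJ necJ.
have J0 : 0 < #|J| by rewrite card_gt0; apply/set0Pn; exists u.
have eJ := EC_even sh ecJ.
rewrite PoszM (absE (signs J sg).2) (absE (signs (I :\: J) (reconn_sym J sh)).1) oc2.
have e : #|I|./2 = ((#|J| - 2)./2 + #|I :\: J|./2).+1.
  by rewrite cardsDS //; have := subset_leq_card JI; lia.
by rewrite /sgn e exprS exprD mulN1r -/(sgn _) -/(sgn _) mulNr opprK mulrACA.
Qed.

Lemma cardUD J L : L \subset ~: J -> #|J :|: L| = #|J| + #|L|.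
Proof.
move=> LJ; rewrite cardsU (_ : J :&: L = set0) ?cards0 ?subn0 //.
apply/setP => x; rewrite !inE; case xJ: (x \in J) => //=.
by apply/negP => /(subsetP LJ); rewrite inE xJ.
Qed.

End Basic.

Theorem mainTheorem8 (T : finType) (g : rel T)
  (g_sym : symmetric g) (g_irr : irreflexive g)
  (u v : T) (huv : u != v) (i : nat) :
  a_idx (add_edge g u v) [set: T] (Posz i) =
  (a_idx g [set: T] (Posz i) +
   \sum_(J : {set T} | EC (add_edge g u v) J && ~~ EC g J)
      `|bnum g J|%N *
      a_idx (reconn (add_edge g u v) J) (~: J)
            (Posz i - Posz (#|J| %/ 2)))%N.
Proof.
have aE : forall (g' : rel T) W k,
    a_idx g' W (Posz k) = (\sum_(I in powerset W | #|I| == k.*2) `|sa g' I|)%N by [].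
have sh : symmetric (add_edge g u v) := add_edge_sym u v g_sym.
rewrite !aE.
under eq_bigr => I _ do rewrite (abs_rec u v I g_sym).
rewrite big_split /=; congr (_ + _)%N.
rewrite big_mkcondr /=.
transitivity (\sum_(I in powerset [set: T])
   \sum_(J in powerset I | EC (add_edge g u v) J && ~~ EC g J)
     (if #|I| == i.*2 then `|bnum g J| * `|sa (reconn (add_edge g u v) J) (I :\: J)| else 0))%N.
  apply: eq_bigr => I _; case: ifP => _ //; by rewrite big1.
rewrite (big_exchange_sub _ [set: T] (fun J => EC (add_edge g u v) J && ~~ EC g J)
   (fun J K => if #|K| == i.*2 then `|bnum g J| * `|sa (reconn (add_edge g u v) J) (K :\: J)| else 0)%N).
apply: eq_big => [J|J /andP [_ /andP [ecJ necJ]]]; first by rewrite powersetE subsetT.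
have eJ := EC_even sh ecJ.
rewrite divn2.
transitivity (\sum_(L in powerset (~: J))
   (if #|J| + #|L| == i.*2 then `|bnum g J| * `|sa (reconn (add_edge g u v) J) L| else 0))%N.
  rewrite setTD; apply: eq_bigr => L; rewrite powersetE => LJ.
  rewrite cardUD //; congr (if _ then _ * `|sa _ _| else _).
  have LJ' : L \subset setT :\: J by rewrite setTD.
  by rewrite (setUDK2 LJ').
case: (leqP (#|J|./2) i) => ki.
  rewrite subzn // aE big_distrr /= big_mkcondr /=; apply: eq_bigr => L _.
  have -> : (#|J| + #|L| == i.*2) = (#|L| == (i - #|J|./2).*2).
    by apply/eqP/eqP; lia.
  by [].
have -> : (Posz i - Posz (#|J|./2))%R = Negz (#|J|./2 - i).-1.
  rewrite NegzE; apply/eqP; rewrite -subr_eq0; apply/eqP; lia.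
rewrite muln0 big1 // => L _; case: ifP => // /eqP; lia.
Qed.
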